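(* Let $H$ be a $2$-transitive affine permutation group of degree $2^6$ on a set $\Omega$, and let $1\ne K\unlhd H$. Assume that $K_\alpha\ne 1$ for $\alpha\in\Omega$, and $K$ is imprimitive on $\Omega$. Then (1) $K_\alpha\cong\mathbb{Z}_s$ with $s\in\{3,7\}$, and there is $x\in H_\alpha$ such that $K_\alpha\langle x\rangle\cong\mathbb{Z}_{21}$; and (2) for each $x\in H_\alpha$ with $K_\alpha\langle x\rangle\cong\mathbb{Z}_{21}$, the subgroup $K\langle x\rangle$ is primitive on $\Omega$.
   Context: An affine permutation group of degree $2^6$ is a permutation group on a set of size $2^6$ having a regular normal subgroup isomorphic to $\mathbb{Z}_2^6$. $H_\alpha$, $K_\alpha$ denote point stabilizers. *)

(* Defs.v *)
From mathcomp Require Import all_boot all_algebra all_fingroup all_solvable.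
Set Implicit Arguments. Unset Strict Implicit. Unset Printing Implicit Defensive.
Local Open Scope group_scope.

Definition regular_on (Omega : finType) (N : {set {perm Omega}}) : bool :=
  [transitive N, on [set: Omega] | 'P] && [forall a, 'C_N[a | 'P] == 1].

Definition affine_2_6 (Omega : finType) (G : {group {perm Omega}}) : Prop :=
  #|Omega| = (2 ^ 6)%N /\
  exists N : {group {perm Omega}},
    [/\ N <| G, regular_on N & N \isog [set: 'rV['F_2]_6]].

Definition imprimitive_on (Omega : finType) (K : {set {perm Omega}}) : bool :=
  [transitive K, on [set: Omega] | 'P] &&
  [exists Q, imprimitivity_system K [set: Omega] 'P Q].

(* Main.v *)
Require Import Defs.
From mathcomp Require Import all_boot all_algebra all_fingroup all_solvable.
From mathcomp Require Import zify.
From Stdlib Require Import Lia.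
Set Implicit Arguments. Unset Strict Implicit. Unset Printing Implicit Defensive.
Local Open Scope group_scope.

Section Reg.
Variables (Omega : finType) (N : {group {perm Omega}}) (a : Omega).
Hypothesis regN : regular_on N.
Hypothesis expN : forall n, n \in N -> n * n = 1.

Lemma invN n : n \in N -> n^-1 = n.
Proof. by move=> Nn; apply: (mulgI n); rewrite mulgV expN. Qed.

Lemma commN n m : n \in N -> m \in N -> commute n m.
Proof.
move=> Nn Nm; have Nnm : n * m \in N by rewrite groupM.
have := invN Nnm; rewrite invMg invN // invN // => ->.
Qed.

Lemma regN_inj n m : n \in N -> m \in N -> n a = m a -> n = m.
Proof.
move=> Nn Nm e; move/andP: regN => [_ /forallP/(_ a)/eqP st].
have : n * m^-1 \in 'C_N[a | 'P].
  rewrite inE groupM ?groupV //=; apply/astab1P; rewrite /= apermE permM e.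
  by rewrite permK.
by rewrite st => /set1gP e1; rewrite -(mulgKV m n) e1 mul1g.
Qed.

Lemma regN_surj b : exists2 n, n \in N & b = n a.
Proof.
move/andP: regN => [trN _].
by have [n Nn ->] := atransP2 trN (in_setT a) (in_setT b); exists n.
Qed.

Lemma conjP (h n : {perm Omega}) : h a = a -> (n ^ h) a = h (n a).
Proof.
move=> ha; rewrite conjgE !permM; congr (h (n _)).
by rewrite -{1}ha permK.
Qed.

Lemma cent_fix (h : {perm Omega}) : h a = a -> (forall n, n \in N -> commute n h) -> h = 1.
Proof.
move=> ha cNh; apply/permP => b; rewrite perm1.
have [n Nn ->] := regN_surj b.
rewrite -conjP //; congr (_ a).
by rewrite conjgE (cNh n Nn) mulKg.
Qed.

End Reg.
Lemma acts_groupP (aT : finGroupType) (rT : finType) (to : {action aT &-> rT})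
   (G : {group aT}) (S : {set rT}) :
  (forall g x, g \in G -> x \in S -> to x g \in S) -> [acts G, on S | to].
Proof.
move=> hS; apply/actsP => g Gg x; apply/idP/idP; last exact: hS.
by move=> h; rewrite -(actK to g x); apply: hS; rewrite ?groupV.
Qed.

Lemma divides_inv (gT : finGroupType) (L : {group gT}) (S : {set gT}) d :
  (forall l x, l \in L -> x \in S -> x ^ l \in S) ->
  (forall x, x \in S -> #|x ^: L| = d) -> d %| #|S|.
Proof.
move=> hS hd.
have acts : [acts L, on S | 'J] by apply: acts_groupP.
rewrite -(acts_sum_card_orbit acts).
rewrite (eq_bigr (fun _ => d)); first by rewrite sum_nat_const dvdn_mull.
by move=> T /imsetP [x Sx ->]; rewrite orbitJ hd.
Qed.

Lemma num_part q b : (q * b = 64)%N -> 1 < q -> q < 64 -> 1 < b < 64.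
Proof. move=> e q1 q2; apply/andP; split; nia. Qed.

Lemma addxx (x : 'rV['F_2]_6) : (x + x = 0)%R.
Proof. apply/rowP => i; rewrite !mxE; move: (x _ i) => y. by case: y => [[|[|k]] hk] //; apply/val_inj. Qed.

Lemma negxx (x : 'rV['F_2]_6) : (- x = x)%R.
Proof. by apply/esym/eqP; rewrite -GRing.addr_eq0 addxx. Qed.

Lemma prodsum (I : finType) (P : pred I) (F : I -> 'rV['F_2]_6) :
  \prod_(i | P i) F i = (\sum_(i | P i) F i)%R.
Proof. by []. Qed.

Lemma num_d_b : all (fun d => all (fun w =>
  (1 < d) ==> (d %| 63) ==> (w %| 64) ==> (1 < w) ==> (w < 64) ==> (d %| w.-1) ==>
  ((d == 3) || ((d == 7) && (w == 8)))) (iota 0 65)) (iota 0 65).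
Proof. vm_compute. reflexivity. Qed.

Lemma num_d d w : 1 < d -> d %| 63 -> w %| 64 -> 1 < w < 64 -> d %| w.-1 ->
  (d = 3) \/ (d = 7 /\ w = 8).
Proof.
move=> d1 d63 w64 /andP [w1 w2] dw.
have dle : d < 65 by rewrite ltnS; apply: leq_trans (dvdn_leq _ d63) _.
have wle : w < 65 by apply: leq_trans w2 _.
have := allP num_d_b d; rewrite mem_iota add0n dle => /(_ isT).
move/allP/(_ w); rewrite mem_iota add0n wle => /(_ isT).
rewrite d1 d63 w64 w1 w2 dw /= => /orP [/eqP -> | /andP [/eqP -> /eqP ->]]; by [left | right].
Qed.

Lemma cent_elt (gT : finGroupType) (L P : {group gT}) e :
  prime e -> P \subset 'N(L) -> cyclic L ->
  e %| #|P| %/ gcdn #|P| (totient #|L|) ->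
  exists2 y, y \in P :&: 'C(L) & #[y] = e.
Proof.
move=> pe nLP cL he.
set m := #|conj_aut L @* P|.
have em : m = #|P : 'C_P(L)|.
  by rewrite /m card_morphim ker_conj_aut (setIidPr nLP) indexgI.
have mA : m %| totient #|L|.
  by rewrite -card_Aut_cyclic // cardSg // Aut_conj_aut.
have mP : m %| #|P| by rewrite em dvdn_indexg.
set g := gcdn #|P| (totient #|L|).
have mg : m %| g by rewrite dvdn_gcd mP mA.
have gP : g %| #|P| by apply: dvdn_gcdl.
have m0 : 0 < m by rewrite em indexg_gt0.
have eC : #|P| %/ g %| #|'C_P(L)|.
  have [t gt] : exists t, g = (m * t)%N by exists (g %/ m); rewrite mulnC divnK.
  have eP : #|P| = (#|'C_P(L)| * m)%N by rewrite em Lagrange ?subsetIl.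
  have : #|'C_P(L)| = (#|P| %/ g * t)%N.
    apply/eqP; rewrite -(eqn_pmul2r m0) -eP -mulnA (mulnC t) -gt divnK //.
  by move=> ->; apply: dvdn_mulr.
have /(Cauchy pe) [y Cy oy] : e %| #|'C_P(L)| by apply: dvdn_trans he eC.
by exists y.
Qed.

Lemma isoZ (gT : finGroupType) (G : {group gT}) n : 1 < n -> cyclic G -> #|G| = n ->
  G \isog [set: 'Z_n].
Proof.
move=> n1 /cyclicP [x defG] cG.
have := Zp_isog x; rewrite /order -defG cG /Zp n1 => iso.
by rewrite isog_sym.
Qed.

Lemma iso21 (gT : finGroupType) (L : {group gT}) y d e :
  #|L| = d -> #[y] = e -> prime d -> prime e -> coprime d e -> (d * e = 21)%N ->
  y \in 'C(L) -> L <*> <[y]> \isog [set: 'Z_21].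
Proof.
move=> oL oy pd pe cde de21 yC.
have cyL : <[y]> \subset 'C(L) by rewrite cycle_subG.
have cm : commute L <[y]> by apply: commute_sym; apply: centC.
have eJ : L <*> <[y]> = L * <[y]> := comm_joingE cm.
apply: (isoZ (n := 21)); first by [].
  change (cyclic (L <*> <[y]>)); rewrite eJ.
  apply: cyclicM; rewrite ?cycle_cyclic ?prime_cyclic ?oL //.
  by rewrite -orderE oy.
change (#|L <*> <[y]>| = 21); rewrite eJ TI_cardMg; first by rewrite oL -orderE oy.
by apply: coprime_TIg; rewrite oL -orderE oy.
Qed.

Lemma num_ce_b : all (fun c => all (fun w => (
  [&& (c %| 64) ==> (c < 64) ==> (3 %| c.-1) ==> (64 == c %[mod 7]) ==> (c == 1),
      (c %| 64) ==> (c < 64) ==> (7 %| c.-1) ==> (64 == c %[mod 3]) ==> (c == 1),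
      (w %| 64) ==> (1 < w) ==> (w < 64) ==> (3 %| w.-1) ==> ~~ (w == 1 %[mod 7]) &
      (w %| 64) ==> (1 < w) ==> (w < 64) ==> (7 %| w.-1) ==> ~~ (w == 1 %[mod 3])])%N)
   (iota 0 65)) (iota 0 65).
Proof. vm_compute. reflexivity. Qed.

Lemma num_c d e c : (d = 3 /\ e = 7) \/ (d = 7 /\ e = 3) ->
  c %| 64 -> c < 64 -> d %| c.-1 -> 64 = c %[mod e] -> (c = 1)%N.
Proof.
move=> de c64 cl dc ce; apply/eqP.
have := allP num_ce_b c; rewrite mem_iota add0n ltnS (ltnW cl) => /(_ isT).
move/allP/(_ 0); rewrite mem_iota add0n => /(_ isT) /and4P [h1 h2 _ _].
by case: de => -[de ee]; subst d e; [move: h1 | move: h2]; rewrite c64 cl dc ce eqxx.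
Qed.

Lemma num_w d e w : (d = 3 /\ e = 7) \/ (d = 7 /\ e = 3) ->
  w %| 64 -> 1 < w < 64 -> d %| w.-1 -> (w = 1 %[mod e])%N -> False.
Proof.
move=> de w64 /andP [w1 wl] dw we.
have := allP num_ce_b 0; rewrite mem_iota add0n => /(_ isT).
move/allP/(_ w); rewrite mem_iota add0n ltnS (ltnW wl) => /(_ isT) /and4P [_ _ h1 h2].
by case: de => -[de ee]; subst d e; [move: h1 | move: h2]; rewrite w64 w1 wl dw we eqxx.
Qed.

Section Main.
Variables (Omega : finType) (H K N : {group {perm Omega}}) (a : Omega).
Hypotheses (cardO : #|Omega| = 64) (nNH : N <| H) (regN : regular_on N)
  (expN : forall n, n \in N -> n * n = 1)
  (trA : [transitive 'C_H[a | 'P], on [set: Omega] :\ a | 'P])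
  (nKH : K <| H) (ntK : K :!=: 1) (ntL : 'C_K[a | 'P] :!=: 1)
  (impK : imprimitive_on K)
  (f : {morphism N >-> 'rV['F_2]_6}) (injf : 'injm f).

Local Notation A := 'C_H[a | 'P].
Local Notation L := 'C_K[a | 'P].

Lemma memA h : h \in A -> h \in H /\ h a = a.
Proof. by rewrite inE => /andP [Hh /astab1P]. Qed.

Lemma memL h : h \in L -> h \in K /\ h a = a.
Proof. by rewrite inE => /andP [Hh /astab1P]. Qed.

Lemma inA h : h \in H -> h a = a -> h \in A.
Proof. by move=> Hh ha; rewrite inE Hh; apply/astab1P. Qed.

Lemma inL h : h \in K -> h a = a -> h \in L.
Proof. by move=> Hh ha; rewrite inE Hh; apply/astab1P. Qed.

Lemma NJ n h : n \in N -> h \in H -> n ^ h \in N.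
Proof. by move=> Nn Hh; rewrite memJ_norm // (subsetP (normal_norm nNH)). Qed.

Lemma KJ n h : n \in K -> h \in H -> n ^ h \in K.
Proof. by move=> Nn Hh; rewrite memJ_norm // (subsetP (normal_norm nKH)). Qed.

Lemma N1 n : n \in N -> (n a == a) = (n == 1).
Proof.
move=> Nn; apply/eqP/eqP => [e|->]; last by rewrite perm1.
by apply: (regN_inj (a:=a) regN Nn (group1 N)); rewrite perm1.
Qed.

Lemma transA n m : n \in N -> m \in N -> n != 1 -> m != 1 ->
  exists2 h, h \in A & m = n ^ h.
Proof.
move=> Nn Nm n1 m1.
have na : n a \in [set: Omega] :\ a by rewrite !inE N1 // n1.
have ma : m a \in [set: Omega] :\ a by rewrite !inE N1 // m1.
have [h Ah e] := atransP2 trA na ma.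
exists h => //; have [Hh ha] := memA Ah.
apply: (regN_inj (a:=a) regN) => //; first exact: NJ.
by rewrite e (conjP n ha).
Qed.

Lemma cardN : #|N| = 64.
Proof.
move/andP: (regN) => [trN /forallP/(_ a)/eqP st].
by rewrite -(card_orbit_stab 'P N a) st cards1 muln1 (atransP trN) ?inE // cardsT.
Qed.

Lemma NsubK : N \subset K.
Proof.
case: (boolP [exists n in N, (n \in K) && (n != 1)]).
  move/existsP => [n /andP[Nn /andP[Kn n1]]].
  apply/subsetP => m Nm; case: (eqVneq m 1) => [->|m1]; first exact: group1.
  have [h Ah ->] := transA Nn Nm n1 m1.
  by apply: KJ => //; case: (memA Ah).
move=> none; exfalso.
have none' : forall n, n \in N -> n \in K -> n = 1.
  move=> n Nn Kn; apply/eqP; apply: contraR none => n1.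
  by apply/existsP; exists n; rewrite Nn Kn n1.
have [k Kk k1] := trivgPn _ ntK.
have HK := normal_sub nKH; have HN := normal_sub nNH.
have cK : forall n, n \in N -> commute k n.
  move=> n Nn; apply/commgP/eqP; apply: none'.
    rewrite commgEr groupM ?NJ ?groupV //; exact: (subsetP HK).
  rewrite commgEl groupM ?KJ ?groupV //; exact: (subsetP HN).
have [n0 Nn0 e] := regN_surj a regN (k a).
have hfix : (k * n0^-1) a = a by rewrite permM e permK.
have h1 : (k * n0^-1) = 1.
  apply: (cent_fix regN hfix) => n Nn; apply: commuteM.
    by apply: commute_sym; exact: cK.
  by apply: (commN expN) => //; rewrite groupV.
have kn0 : k = n0 by rewrite -(mulgKV n0 k) h1 mul1g.
by move/eqP: k1; apply; apply: none' => //; rewrite kn0.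
Qed.

Lemma HsubA h : h \in A -> h \in H.
Proof. by case/memA. Qed.

Lemma LsubA l : l \in L -> l \in A.
Proof. by case/memL => Kl la; apply: inA => //; exact: (subsetP (normal_sub nKH)). Qed.

Lemma AnormL h : h \in A -> h \in 'N(L).
Proof.
move=> Ah; have [Hh ha] := memA Ah.
have : A \subset 'N(L).
  apply: normsI; first by apply: subset_trans (subsetIl _ _) (normal_norm nKH).
  by apply: subset_trans (subsetIr _ _) (normG _).
by move/subsetP; apply.
Qed.

Lemma LJ l h : l \in L -> h \in A -> l ^ h \in L.
Proof. by move=> Ll Ah; rewrite memJ_norm // AnormL. Qed.

Lemma cent_fixA (h : {perm Omega}) : h a = a -> (forall n, n \in N -> n ^ h = n) -> h = 1.
Proof.
move=> ha hc; apply: (cent_fix regN ha) => n Nn.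
by apply/commgP/conjg_fixP; rewrite hc.
Qed.

Lemma cent_L n : n \in N -> (forall l, l \in L -> n ^ l = n) -> n = 1.
Proof.
move=> Nn cn; apply/eqP; apply: contraT => n1.
have [l Ll l1] := trivgPn _ ntL.
suff : l = 1 by move/eqP: l1.
have [Kl la] := memL Ll.
apply: cent_fixA la _ => m Nm.
case: (eqVneq m 1) => [->|m1]; first by rewrite conj1g.
have [h Ah ->] := transA Nn Nm n1 m1.
have e : h * l = l ^ h^-1 * h by rewrite conjgE invgK !mulgA mulgKV.
rewrite -conjgM e conjgM (cn (l ^ h^-1)) //; apply: LJ => //; by rewrite groupV.
Qed.

Lemma classJA n h : h \in A -> (n ^ h) ^: L = (n ^: L) :^ h.
Proof. by move=> Ah; rewrite -class_lcoset -norm_rlcoset ?AnormL // class_rcoset. Qed.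

Lemma osize n m : n \in N -> m \in N -> n != 1 -> m != 1 ->
  #|n ^: L| = #|m ^: L|.
Proof.
move=> Nn Nm n1 m1; have [h Ah ->] := transA Nn Nm n1 m1.
by rewrite classJA // cardJg.
Qed.

Lemma osize_gt1 n : n \in N -> n != 1 -> 1 < #|n ^: L|.
Proof.
move=> Nn n1; rewrite ltnNge; apply/negP => /card_le1_eqP le1.
move/eqP: n1; apply; apply: cent_L => // l Ll.
by apply: le1; rewrite ?class_refl ?memJ_class.
Qed.

Lemma block_sub (G : {group {perm Omega}}) Q :
  N \subset G -> G \subset H -> imprimitivity_system G [set: Omega] 'P Q ->
  exists W : {group {perm Omega}},
    [/\ W \subset N, 1 < #|W| < 64 &
        forall g w, g \in G -> g a = a -> w \in W -> w ^ g \in W].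
Proof.
move=> sNG sGH /and3P [/and3P [/eqP covQ trivQ nset0] actsQ /andP [q1 q64]].
have actQ : forall g C, g \in G -> C \in Q -> [set g x | x in C] \in Q.
  by move=> g C Gg QC; have := (actsP actsQ) g Gg C; rewrite QC; apply.
set B := pblock Q a.
have QB : B \in Q by apply: pblock_mem; rewrite covQ inE.
have aB : a \in B by rewrite mem_pblock covQ inE.
have blk : forall g C x, g \in G -> C \in Q -> x \in C -> g x \in B ->
    [set g y | y in C] = B.
  move=> g C x Gg QC xC gxB.
  have Q' := actQ g C Gg QC.
  rewrite -(def_pblock trivQ Q' (imset_f _ xC)).
  by rewrite (def_pblock trivQ QB gxB).
pose W := [set n in N | n a \in B].
have gW : group_set W.
  apply/group_setP; split; first by rewrite inE group1 perm1 aB.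
  move=> n m; rewrite !inE => /andP [Nn nB] /andP [Nm mB].
  rewrite groupM //= permM.
  have <- := blk m B a (subsetP sNG m Nm) QB aB mB.
  exact: imset_f.
exists (Group gW); split.
- by apply/subsetP => n; rewrite inE => /andP [].
- have cardW : #|W| = #|B|.
    have -> : B = (fun n : {perm Omega} => n a) @: W.
      apply/setP => b; apply/idP/imsetP => [bB|[n]].
        have [n Nn e] := regN_surj a regN b.
        by exists n => //; rewrite inE Nn -e bB.
      by rewrite inE => /andP [_ nB] ->.
    rewrite card_in_imset // => n m; rewrite !inE => /andP [Nn _] /andP [Nm _].
    exact: (regN_inj (a:=a) regN).
  have unif : forall C, C \in Q -> #|C| = #|B|.
    move=> C QC; have [c cC] : exists c, c \in C.
      by apply/set0Pn; apply: contraNneq nset0 => <-.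
    have [n Nn e] := regN_surj a regN c.
    have Gn := subsetP sNG n Nn.
    have := blk n^-1 C c (groupVr Gn) QC cC; rewrite e permK => /(_ aB) <-.
    by rewrite card_imset //; exact: perm_inj.
  have : (#|Q| * #|B|)%N = 64.
    rewrite -cardO -cardsT -covQ.
    rewrite (card_partition (P:=Q) (D:=cover Q)); last by rewrite /partition eqxx trivQ nset0.
    by rewrite (eq_bigr (fun _ => #|B|)) ?sum_nat_const // mulnC.
  rewrite /= cardW; move: q1 q64; rewrite cardsT cardO => q1 q64 hq.
  exact: (num_part hq).
- move=> g w Gg ga; rewrite !inE => /andP [Nw wB].
  rewrite NJ ?(subsetP sGH) //= (conjP w ga).
  by rewrite -(blk g B a Gg QB aB) ?ga // imset_f.
Qed.

Lemma ND1 n l : n \in N :\ 1 -> l \in L -> n ^ l \in N :\ 1.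
Proof.
move=> nN Ll; move: nN; rewrite !inE conjg_eq1 => /andP [-> Nn]; rewrite NJ //.
exact: HsubA (LsubA Ll).
Qed.

Lemma ntN : N :!=: 1.
Proof. by apply/negP => /eqP N1'; move: cardN; rewrite N1' cards1. Qed.

Lemma exists_d : exists d, (forall n, n \in N -> n != 1 -> #|n ^: L| = d) /\
  (d = 3 \/ (d = 7 /\ exists W : {group {perm Omega}},
      [/\ W \subset N, #|W| = 8 & forall l w, l \in L -> w \in W -> w ^ l \in W])).
Proof.
have [n0 Nn0 n01] := trivgPn _ ntN.
exists #|n0 ^: L|.
have dsz : forall n, n \in N -> n != 1 -> #|n ^: L| = #|n0 ^: L|.
  by move=> n Nn n1; apply: osize.
split => //.
move/andP: impK => [_ /existsP [Q impQ]].
have [W [sWN /andP [w1 w64] nW]] := block_sub NsubK (normal_sub nKH) impQ.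
have hW : forall l w, l \in L -> w \in W -> w ^ l \in W.
  by move=> l w Ll Ww; case/memL: Ll => Kl la; apply: nW.
have d63 : #|n0 ^: L| %| 63.
  have -> : 63 = #|N :\ 1| by move: (cardsD1 1 N); rewrite group1 cardN add1n; case.
  apply: (divides_inv (L := L)); first by move=> l x Ll Sx; apply: ND1.
  by move=> x; rewrite !inE => /andP [x1 Nx]; apply: dsz.
have dW : #|n0 ^: L| %| (#|W|).-1.
  have -> : (#|W|).-1 = #|W :\ 1| by rewrite (cardsD1 1 W) group1.
  apply: (divides_inv (L := L)).
    by move=> l x Ll; rewrite !inE conjg_eq1 => /andP [-> Wx]; rewrite hW.
  move=> x; rewrite !inE => /andP [x1 Wx]; apply: dsz => //.
  exact: (subsetP sWN).
have w64' : #|W| %| 64 by rewrite -cardN cardSg.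
have := num_d (osize_gt1 Nn0 n01) d63 w64' _ dW; rewrite w1 w64 => /(_ isT).
case=> [-> | [-> w8]]; [by left | right; split => //].
by exists W; split.
Qed.

Definition closure_prop := forall u v, u \in N -> u != 1 -> v \in u ^: L -> v != u ->
  u * v \in u ^: L.

Lemma classN u : u \in N -> u ^: L \subset N.
Proof.
move=> Nu; apply/subsetP => x /imsetP [l Ll ->]; apply: NJ => //.
exact: HsubA (LsubA Ll).
Qed.

Lemma class1 u x : u != 1 -> x \in u ^: L -> x != 1.
Proof. by move=> u1 /imsetP [l Ll ->]; rewrite conjg_eq1. Qed.

Lemma closure_7 (W : {group {perm Omega}}) :
  W \subset N -> #|W| = 8 -> (forall l w, l \in L -> w \in W -> w ^ l \in W) ->
  (forall n, n \in N -> n != 1 -> #|n ^: L| = 7) -> closure_prop.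
Proof.
move=> sWN W8 nW d7.
have [w Ww w1] : exists2 w, w \in W & w != 1.
  by apply/trivgPn; apply/negP => /eqP W1; move: W8; rewrite W1 cards1.
have Nw := subsetP sWN w Ww.
have WD : W :\ 1 = w ^: L.
  apply/esym/eqP; rewrite eqEcard; apply/andP; split.
    apply/subsetP => x /imsetP [l Ll ->]; rewrite !inE conjg_eq1 w1.
    exact: nW.
  rewrite d7 //; move: (cardsD1 1 W); rewrite group1 W8 add1n; case => <-.
  by [].
move=> u v Nu u1 vO vu.
have [h Ah eu] := transA Nw Nu w1 u1.
have Hh := HsubA Ah.
have Nv : v \in N by apply: (subsetP (classN Nu)).
move: vO vu; rewrite eu classJA // -WD !mem_conjg conjMg conjgK => vW vu.
move: vW; rewrite !inE => /andP [v1' vW].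
rewrite groupM // andbT; apply: contra vu => /eqP e.
have e' : v ^ h^-1 = w by apply: (mulgI w); rewrite e expN.
by rewrite -(conjgKV h v) e'.
Qed.

Lemma closure_3 :
  (forall n, n \in N -> n != 1 -> #|n ^: L| = 3) -> closure_prop.
Proof.
move=> d3 u v Nu u1 vO vu.
set O := u ^: L.
have ON : forall m, m \in O -> m \in N by move=> m; apply: (subsetP (classN Nu)).
have injf' := injmP injf.
pose c := \prod_(m in O) m.
have Nc : c \in N by apply: group_prod.
have fc : f c = (\sum_(m in O) f m)%R by rewrite /c morph_prod.
have cfix : forall l, l \in L -> c ^ l = c.
  move=> l Ll; apply: injf' => //; first by rewrite NJ // HsubA // LsubA.
  have -> : c ^ l = \prod_(m in O) m ^ l.
    by rewrite /c (big_morph (conjg^~ l) (fun x y => conjMg x y l) (conj1g l)).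
  rewrite morph_prod; last first.
    by move=> m Om; rewrite NJ ?ON // HsubA // LsubA.
  rewrite prodsum fc.
  rewrite [RHS](reindex_inj (conjg_inj l)) /=.
  apply: eq_bigl => m; rewrite /O memJ_norm //.
  exact: (subsetP (class_norm u L)).
have c1 : c = 1 by apply: cent_L.
have s0 : (\sum_(m in O) f m = 0)%R by rewrite -fc c1 morph1.
have Ou : u \in O by apply: class_refl.
have [z ez] : exists z, O :\ u :\ v = [set z].
  apply/cards1P.
  have := cardsD1 u O; rewrite Ou d3 // add1n => -[] e2.
  have := cardsD1 v (O :\ u); rewrite !inE vu vO -e2 add1n => -[] <-.
  by [].
have Oz : z \in O.
  have : z \in O :\ u :\ v by rewrite ez set11.
  by rewrite !inE => /and3P [].
have Nv := ON v vO; have Nz := ON z Oz.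
move: s0; rewrite (big_setD1 u) //= (big_setD1 v) ?inE ?vu //= ez big_set1.
move=> s0.
have fz : f z = f (u * v).
  rewrite morphM //; change (f z = f u + f v)%R.
  apply/eqP; rewrite -(GRing.subr_eq0) GRing.opprD !negxx.
  by rewrite GRing.addrC -GRing.addrA s0.
by rewrite -(injf' z (u * v)) ?groupM.
Qed.

Lemma claimS (cl : closure_prop) l u v : l \in L -> u \in N -> u != 1 -> u ^ l = u ->
  v \in N -> v != 1 -> v \notin u ^: L -> v ^ l = v.
Proof.
move=> Ll Nu u1 ul Nv v1 vO; case: (eqVneq (v ^ l) v) => // vl.
exfalso; move/negP: (vO); apply.
have Hl := HsubA (LsubA Ll).
have cNuv := commN expN Nu Nv.
set w := u * v.
have Nw : w \in N by rewrite groupM.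
have w1 : w != 1.
  apply: contra vO => /eqP e.
  have -> : v = u^-1 by apply: (mulgI u); rewrite mulgV -e.
  by rewrite (invN expN) // class_refl.
have x1 : v * v ^ l \in v ^: L by apply: cl => //; rewrite memJ_class.
have wl : w ^ l = u * v ^ l by rewrite conjMg ul.
have wl1 : w ^ l != w.
  by apply: contra vl; rewrite wl /w => /eqP /mulgI ->.
have x2 : w * w ^ l \in w ^: L by apply: cl => //; rewrite memJ_class.
have ex : w * w ^ l = v * v ^ l.
  by rewrite wl /w -mulgA (mulgA v u) -cNuv -!mulgA (mulgA u u) expN // mul1g.
rewrite ex in x2.
have wv : w \in v ^: L by apply: (class_trans _ x1); rewrite class_sym.
have wnv : w != v.
  by apply: contra u1; rewrite /w -{2}(mul1g v) => /eqP /mulIg ->.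
have := cl v w Nv v1 wv wnv.
rewrite /w mulgA -cNuv -mulgA expN // mulg1.
by rewrite class_sym.
Qed.

Lemma semireg (cl : closure_prop) d :
  (forall n, n \in N -> n != 1 -> #|n ^: L| = d) -> d <= 7 ->
  forall l u, l \in L -> u \in N -> u != 1 -> u ^ l = u -> l = 1.
Proof.
move=> hd d7 l u Ll Nu u1 ul.
have [v vS vO] : exists2 v, v \in N :\ 1 & v \notin u ^: L.
  apply/exists_inP; rewrite -negb_forall_in; apply/negP => /forall_inP hs.
  have : N :\ 1 \subset u ^: L by apply/subsetP => x /hs.
  move/subset_leq_card; rewrite hd //.
  by move: (cardsD1 1 N); rewrite group1 cardN add1n => -[] <-; apply/negP; rewrite -ltnNge; apply: leq_ltn_trans d7 _.
move: vS; rewrite !inE => /andP [v1 Nv].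
have vl := claimS cl Ll Nu u1 ul Nv v1 vO.
have [_ la] := memL Ll.
apply: cent_fixA la _ => m Nm.
case: (eqVneq m 1) => [->|m1]; first by rewrite conj1g.
case: (boolP (m \in u ^: L)) => mO; last first. exact: (claimS cl Ll Nu u1 ul Nm m1 mO).
apply: (claimS cl Ll Nv v1 vl Nm m1).
apply: contra vO => mv.
by apply: (class_trans _ mO); rewrite class_sym.
Qed.


Lemma card_L : exists d, [/\ d = 3 \/ d = 7, #|L| = d &
  forall n, n \in N -> n != 1 -> #|n ^: L| = d].
Proof.
have [d [hd hd37]] := exists_d.
have cl : closure_prop.
  case: hd37 => [d3 | [d7 [W [sWN W8 nW]]]]; first by apply: closure_3; rewrite -d3.
  by apply: (closure_7 sWN W8 nW); rewrite -d7.
have d7 : d <= 7 by case: hd37 => [-> | [-> _]].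
exists d; split => //; first by case: hd37 => [-> | [-> _]]; [left | right].
have [n0 Nn0 n01] := trivgPn _ ntN.
rewrite -(hd n0 Nn0 n01) -index_cent1.
have -> : 'C_L[n0] = 1.
  apply/trivgP/subsetP => l; rewrite inE => /andP [Ll cl0].
  rewrite inE; apply/eqP; apply: (semireg cl hd d7 Ll Nn0 n01).
  by apply/conjg_fixP/commgP; apply: commute_sym; apply/cent1P.
by rewrite indexg1.
Qed.

Lemma A63 : 63 %| #|A|.
Proof.
have := atrans_dvd trA.
by move: (cardsD1 a [set: Omega]); rewrite in_setT cardsT cardO add1n => -[] <-.
Qed.

Lemma partb : exists2 x, x \in A & L <*> <[x]> \isog [set: 'Z_21].
Proof.
have [d [d37 oL hd]] := card_L.
have cL : cyclic L by apply: prime_cyclic; rewrite oL; case: d37 => ->.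
have nLA : A \subset 'N(L) by apply/subsetP => h; apply: AnormL.
case: d37 => d3.
- have [y0 Ay0 oy0] := Cauchy (isT : prime 7) (dvdn_trans (isT : 7 %| 63) A63).
  have nLP : <[y0]> \subset 'N(L) by rewrite cycle_subG (subsetP nLA).
  have he : 7 %| #|<[y0]>| %/ gcdn #|<[y0]>| (totient #|L|).
    by rewrite -orderE oy0 oL d3.
  have [y /setIP [Py Cy] oy] := cent_elt (isT : prime 7) nLP cL he.
  have sPA : <[y0]> \subset A by rewrite cycle_subG.
  have Ay : y \in A := subsetP sPA y Py.
  exists y => //; apply: (iso21 (d := 3) (e := 7)) => //; by rewrite -d3.
- have [S sylS] := Sylow_exists 3 A.
  have [sSA oS] := pHallP _ _ _ sylS.
  have pS := pHall_pgroup sylS.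
  have lS : 2 <= logn 3 #|S|.
    rewrite oS logn_part -pfactor_dvdn // ?cardG_gt0 //.
    exact: dvdn_trans (isT : 9 %| 63) A63.
  have [Q [sQS _ oQ]] := normal_pgroup pS (normal_refl S) lS.
  have nLQ : Q \subset 'N(L) by apply: subset_trans sQS (subset_trans sSA nLA).
  have he : 3 %| #|Q| %/ gcdn #|Q| (totient #|L|) by rewrite oQ oL d3.
  have [y /setIP [Qy Cy] oy] := cent_elt (isT : prime 3) nLQ cL he.
  have Ay : y \in A by apply: (subsetP sSA); apply: (subsetP sQS).
  exists y => //; apply: (iso21 (d := 7) (e := 3)) => //; by rewrite -d3.
Qed.

Lemma partc x : x \in A -> L <*> <[x]> \isog [set: 'Z_21] ->
  [primitive K <*> <[x]>, on [set: Omega] | 'P].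
Proof.
move=> Ax iso.
have [d [d37 oL hd]] := card_L.
set M := L <*> <[x]>.
have abM : abelian M by rewrite (isog_abelian iso) FinRing.zmod_abelian.
have oM : #|M| = 21 by rewrite (card_isog iso) cardsT card_ord.
have [e [pe de]] : exists e, prime e /\ ((d = 3 /\ e = 7) \/ (d = 7 /\ e = 3)).
  by case: d37 => ->; [exists 7 | exists 3]; split => //; [left | right].
have e21 : e %| #|M| by rewrite oM; case: de => -[_ ->].
have [y My oy] := Cauchy pe e21.
have sMA : M \subset A.
  rewrite join_subG cycle_subG Ax andbT; apply/subsetP => l; exact: LsubA.
have Ay := subsetP sMA y My.
have [Hy ya] := memA Ay.
have cLy : forall l, l \in L -> commute l y.
  by move=> l Ll; apply: (centsP abM) => //; apply: (subsetP (joing_subl _ _)).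
have ey1 : y != 1.
  by apply/eqP => y1; move: oy pe; rewrite y1 order1 => <-.
have pY : e.-group <[y]> by rewrite /pgroup -orderE oy pnat_id.
have sYA : <[y]> \subset A by rewrite cycle_subG.
have CN1 : #|'C_N[y]| = 1%N.
  have actsN : [acts <[y]>, on N | 'J].
    apply: acts_groupP => g n Yg Nn /=; apply: NJ => //.
    exact: HsubA (subsetP sYA g Yg).
  have := pgroup_fix_mod pY actsN; rewrite afixJ cent_cycle cardN => he.
  have invC : forall l n, l \in L -> n \in 'C_N[y] :\ 1 -> n ^ l \in 'C_N[y] :\ 1.
    move=> l n Ll; rewrite !in_setD1 !in_setI conjg_eq1 => /and3P [n1 Nn Cn].
    rewrite n1 NJ ?(HsubA (LsubA Ll)) //=.
    have yl : y ^ l = y by apply/conjg_fixP/commgP; apply: commute_sym; apply: cLy.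
    by rewrite -yl cent1J memJ_conjg.
  have dC : d %| #|'C_N[y] :\ 1|.
    apply: (divides_inv (L := L)) => // n; rewrite !inE => /and3P [n1 Nn _].
    exact: hd.
  have c64 : #|'C_N[y]| %| 64 by rewrite -cardN cardSg ?subsetIl.
  have cl64 : #|'C_N[y]| < 64.
    rewrite ltn_neqAle (dvdn_leq _ c64) // andbT; apply/negP => /eqP c64'.
    have eqC : 'C_N[y] = N.
      apply/eqP; rewrite eqEcard subsetIl cardN c64' leqnn //.
    move/eqP: ey1; apply; apply: cent_fixA ya _ => n Nn.
    have : n \in 'C_N[y] by rewrite eqC.
    by rewrite inE => /andP [_ /cent1P cny]; apply/conjg_fixP/commgP.
  apply: (num_c de c64 cl64) => //.
  by move: dC; rewrite (cardsD1 1 'C_N[y]) group1 add1n.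
have sNG : N \subset K <*> <[x]> by apply: subset_trans NsubK (joing_subl _ _).
have sGH : K <*> <[x]> \subset H.
  by rewrite join_subG (normal_sub nKH) cycle_subG (HsubA Ax).
have sMG : M \subset K <*> <[x]>.
  rewrite join_subG joing_subr andbT.
  by apply: subset_trans (subsetIl _ _) (joing_subl _ _).
apply/andP; split.
  move/andP: (regN) => [trN _].
  rewrite (atrans_supgroup sNG trN); apply: acts_groupP => g b _ _; exact: in_setT.
apply/existsP => -[Q impQ].
have [W [sWN /andP [w1 w64] nW]] := block_sub sNG sGH impQ.
have dW : d %| #|W :\ 1|.
  apply: (divides_inv (L := L)).
    move=> l n Ll; rewrite !inE conjg_eq1 => /andP [-> Wn] /=.
    have [Kl la] := memL Ll.
    by apply: nW => //; apply: (subsetP (joing_subl _ _)).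
  move=> n; rewrite !inE => /andP [n1 Wn]; apply: hd => //.
  exact: (subsetP sWN).
have actsW : [acts <[y]>, on W | 'J].
  apply: acts_groupP => g n Yg Wn /=.
  have [_ ga] := memA (subsetP sYA g Yg).
  apply: nW => //; apply: (subsetP sMG); apply: (subsetP (_ : <[y]> \subset M)) => //.
  by rewrite cycle_subG.
have := pgroup_fix_mod pY actsW; rewrite afixJ cent_cycle => hW.
have CW1 : #|W :&: 'C[y]| = 1%N.
  apply/eqP; rewrite eqn_leq -{1}CN1 subset_leq_card ?setSI //.
  by rewrite cardG_gt0.
rewrite CW1 in hW.
apply: (num_w de _ _ _ hW).
- by rewrite -cardN cardSg.
- by rewrite w1 w64.
- by rewrite (cardsD1 1 W) group1 add1n.
Qed.

End Main.

Theorem lemma3p3 (Omega : finType) (H K : {group {perm Omega}}) :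
  affine_2_6 H ->
  [transitive^2 H, on [set: Omega] | 'P] ->
  K :!=: 1 -> K <| H ->
  (forall a : Omega, 'C_K[a | 'P] :!=: 1) ->
  imprimitive_on K ->
  forall a : Omega,
    (exists s : nat, (s = 3 \/ s = 7)%N /\ 'C_K[a | 'P] \isog [set: 'Z_s]) /\
    (exists2 x, x \in 'C_H[a | 'P] &
        ('C_K[a | 'P] <*> <[x]>) \isog [set: 'Z_21]) /\
    (forall x, x \in 'C_H[a | 'P] ->
        ('C_K[a | 'P] <*> <[x]>) \isog [set: 'Z_21] ->
        [primitive K <*> <[x]>, on [set: Omega] | 'P]).
Proof.
move=> [cardO [N [nNH regN isoN]]] tr2 ntK nKH ntLall impK a.
have [f injf _] := isogP isoN.
have expN : forall n, n \in N -> n * n = 1.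
  move=> n Nn; apply: (injmP injf) => //; first by rewrite groupM.
  by rewrite morphM // morph1; exact: (addxx (f n)).
have trA : [transitive 'C_H[a | 'P], on [set: Omega] :\ a | 'P].
  apply: (ntransitive1 (m := 1)) => //.
  exact: (stab_ntransitive (m := 1)) (in_setT a) tr2.
have ntL := ntLall a.
split.
  have [d [d37 oL _]] := card_L cardO nNH regN expN trA nKH ntK ntL impK injf.
  exists d; split => //.
  have pd : prime d by case: d37 => ->.
  apply: (isoZ (n := d)); first exact: prime_gt1.
    by apply: prime_cyclic; rewrite oL.
  exact: oL.
split; first exact: (partb cardO nNH regN expN trA nKH ntK ntL impK injf).
by move=> x Ax iso; apply: (partc cardO nNH regN expN trA nKH ntK ntL impK injf Ax iso).
Qed.
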